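(* For any real $C^1$ function $u$ on a domain in $\mathscr H$, at every point where $\mathrm{grad}\,u\ne0$, the $2$-element $d_0u\wedge d_1u$ is elementary strongly positive.
   Context: $\mathscr H=\mathbb R^{4n}\times\mathbb R$ with vector fields $X_{2l-1}=\partial_{x_{2l-1}}-2x_{2l}\partial_t$, $X_{2l}=\partial_{x_{2l}}+2x_{2l-1}\partial_t$ ($l=1,\dots,2n$). For $l=0,\dots,n-1$: $Z_{l0'}=X_{4l+1}+\mathbf iX_{4l+2}$, $Z_{l1'}=-X_{4l+3}-\mathbf iX_{4l+4}$, $Z_{(n+l)0'}=X_{4l+3}-\mathbf iX_{4l+4}$, $Z_{(n+l)1'}=X_{4l+1}-\mathbf iX_{4l+2}$. Fix a basis $\omega^0,\dots,\omega^{2n-1}$ of $\mathbb C^{2n}$; $d_\alpha u=\sum_{A=0}^{2n-1}Z_{A\alpha'}u\,\omega^A$ ($\alpha=0,1$). For a quaternionic $k\times n$ matrix $\mathcal M=a+b\mathbf j$ ($a,b$ complex $k\times n$) put $\tau(\mathcal M)=\begin{pmatrix}a&-b\\\bar b&\bar a\end{pmatrix}$. A right $\mathbb H$-linear map $\eta:\mathbb H^n\to\mathbb H$ is a $1\times n$ quaternionic row; set $\eta^*\tilde\omega^p=\sum_{j=0}^{2n-1}\tau(\eta)_{pj}\omega^j$, $p=0,1$. An element of $\wedge^{2k}\mathbb C^{2n}$ is elementary strongly positive if it equals $\eta_1^*\tilde\omega^0\wedge\eta_1^*\tilde\omega^1\wedge\cdots\wedge\eta_k^*\tilde\omega^0\wedge\eta_k^*\tilde\omega^1$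 for some linearly independent right $\mathbb H$-linear maps $\eta_1,\dots,\eta_k:\mathbb H^n\to\mathbb H$. *)

(* Defs.v *)
From HB Require Import structures.
From mathcomp Require Import all_boot all_order all_algebra.
From mathcomp Require Import all_classical all_reals all_analysis.
From mathcomp Require Import complex.
Set Implicit Arguments. Unset Strict Implicit. Unset Printing Implicit Defensive.
Import Order.TTheory GRing.Theory Num.Theory.
Import numFieldNormedType.Exports.
Local Open Scope ring_scope.
Local Open Scope classical_set_scope.

(* The quaternionic Heisenberg group  H = R^{4n} x R  is modelled as
   'rV[R]_((4*n).+1): coordinate with 0-based index m < 4n is x_{m+1},
   the last coordinate (index 4n = ord_max) is t. *)
Definition Hpt (R : realType) (n : nat) := 'rV[R]_((4 * n).+1).

Definition xco (R : realType) (n : nat) (p : Hpt R n) (m : nat) : R :=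
  p 0 (inord m).

Definition ex (R : realType) (n : nat) (m : nat) : Hpt R n :=
  \row_(j < (4 * n).+1) (if (j : nat) == m then 1 else 0).
Definition et (R : realType) (n : nat) : Hpt R n :=
  \row_(j < (4 * n).+1) (if (j : nat) == 4 * n then 1 else 0).

(* The left-invariant vector field X_{m+1} at p, as a tangent vector
   (0-based m):  X_{2l-1} = d_{x_{2l-1}} - 2 x_{2l} d_t,
                 X_{2l}   = d_{x_{2l}}   + 2 x_{2l-1} d_t. *)
Definition Xdir (R : realType) (n : nat) (p : Hpt R n) (m : nat) : Hpt R n :=
  if odd m then ex R n m + (2 * xco p m.-1) *: et R n
  else ex R n m - (2 * xco p m.+1) *: et R n.

Definition Xu (R : realType) (n : nat) (u : Hpt R n -> R) (p : Hpt R n)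
  (m : nat) : R := 'D_(Xdir p m) u p.

Definition hgrad (R : realType) (n : nat) (u : Hpt R n -> R) (p : Hpt R n)
  : 'rV[R]_(4 * n) := \row_(m < 4 * n) Xu u p m.

Definition C1_on (R : realType) (n : nat) (D : set (Hpt R n))
  (u : Hpt R n -> R) : Prop :=
  forall j : 'I_((4 * n).+1),
    (forall x, D x -> derivable u x (ex R n j)) /\
    {within D, continuous (fun x => 'D_(ex R n j) u x)}.

Definition cplx (R : realType) (a b : R) : R[i] := Complex a b.

Definition Zu (R : realType) (n : nat) (u : Hpt R n -> R) (p : Hpt R n)
  (A : 'I_(n + n)) (alpha : 'I_2) : R[i] :=
  let X k := Xu u p k in
  match fintype.split A with
  | inl l => if (alpha : nat) == 0%N
             then cplx (X (4 * l)%N) (X (4 * l + 1)%N)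
             else cplx (- X (4 * l + 2)%N) (- X (4 * l + 3)%N)
  | inr l => if (alpha : nat) == 0%N
             then cplx (X (4 * l + 2)%N) (- X (4 * l + 3)%N)
             else cplx (X (4 * l)%N) (- X (4 * l + 1)%N)
  end.

(* d_alpha u at p, as its coordinate vector in the basis omega^0..omega^{2n-1}
   of C^{2n} *)
Definition d_alpha (R : realType) (n : nat) (alpha : 'I_2)
  (u : Hpt R n -> R) (p : Hpt R n) : 'rV[R[i]]_(n + n) :=
  \row_(A < n + n) Zu u p A alpha.

(* wedge of two 1-vectors in C^N, represented by its (antisymmetric)
   coefficient matrix: v /\ w = sum_{i<j} (v_i w_j - v_j w_i) omega^i/\omega^j *)
Definition wedge2 (C : comRingType) (N : nat) (v w : 'rV[C]_N) : 'M[C]_N :=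
  \matrix_(i < N, j < N) (v 0 i * w 0 j - v 0 j * w 0 i).

(* quaternionic 1 x n row  eta = a + b j  (a, b complex 1 x n rows);
   tau(eta) = [[a, -b], [conj b, conj a]];  eta^* omega~^p = row p of tau(eta) *)
Definition tau_row0 (R : realType) (n : nat) (a b : 'rV[R[i]]_n)
  : 'rV[R[i]]_(n + n) := row_mx a (- b).
Definition tau_row1 (R : realType) (n : nat) (a b : 'rV[R[i]]_n)
  : 'rV[R[i]]_(n + n) := row_mx (map_mx conjc b) (map_mx conjc a).

(* elementary strongly positive 2-element (case k = 1): equals
   eta^* omega~^0 /\ eta^* omega~^1 for a linearly independent (i.e. nonzero)
   right H-linear map eta = a + b j : H^n -> H *)
Definition elem_strongly_positive2 (R : realType) (n : nat)
  (w : 'M[R[i]]_(n + n)) : Prop :=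
  exists a b : 'rV[R[i]]_n, (a != 0 \/ b != 0) /\
    w = wedge2 (tau_row0 a b) (tau_row1 a b).

(* Main.v *)
Require Import Defs.
From HB Require Import structures.
From mathcomp Require Import all_boot all_order all_algebra.
From mathcomp Require Import all_classical all_reals all_analysis.
From mathcomp Require Import complex.
Import Order.TTheory GRing.Theory Num.Theory.
Import numFieldNormedType.Exports.
Local Open Scope ring_scope.
Local Open Scope classical_set_scope.

Theorem proposition4p2 (R : realType) (n : nat) (D : set (Hpt R n))
  (u : Hpt R n -> R) :
  open D -> connected D -> C1_on D u ->
  forall p : Hpt R n, D p -> hgrad u p != 0 ->
  elem_strongly_positive2
    (wedge2 (d_alpha (0 : 'I_2) u p) (d_alpha (1 : 'I_2) u p)).
Proof.
move=> _ _ _ p _ hg.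
set x := Xu u p.
pose a : 'rV[R[i]]_n := \row_(l < n) cplx (x (4 * l)%N) (x (4 * l + 1)%N).
pose b : 'rV[R[i]]_n := \row_(l < n) cplx (- x (4 * l + 2)%N) (x (4 * l + 3)%N).
have d0E : d_alpha 0 u p = tau_row0 a b.
  apply/rowP => A; rewrite /tau_row0 mxE -[A]splitK.
  case: (fintype.split A) => l; rewrite /Zu unsplitK /=.
    by rewrite row_mxEl !mxE.
  by rewrite row_mxEr !mxE; apply/eqP; rewrite eq_complex /= opprK !eqxx.
have d1E : d_alpha 1 u p = tau_row1 a b.
  apply/rowP => A; rewrite /tau_row1 mxE -[A]splitK.
  case: (fintype.split A) => l; rewrite /Zu unsplitK /=.
    by rewrite row_mxEl !mxE.
  by rewrite row_mxEr !mxE.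
exists a, b; split; last by rewrite d0E d1E.
apply/orP; rewrite -negb_and; apply: contra hg => /andP[/eqP a0 /eqP b0].
have h0 : forall m, (m < 4 * n)%N -> x m = 0.
  move=> m hm; have hl : (m %/ 4 < n)%N by rewrite ltn_divLR // mulnC.
  have := congr1 (fun v : 'rV_n => v 0 (Ordinal hl)) a0.
  rewrite !mxE => /eqP; rewrite eq_complex /= => /andP[/eqP e0 /eqP e1].
  have := congr1 (fun v : 'rV_n => v 0 (Ordinal hl)) b0.
  rewrite !mxE => /eqP; rewrite eq_complex /= => /andP[/eqP e2 /eqP e3].
  rewrite (div.divn_eq m 4) mulnC.
  move: (m %% 4)%N (ltn_mod m 4) => [|[|[|[|k]]]] hk.
  - rewrite addn0; exact: e0.
  - exact: e1.
  - by rewrite -[x _]opprK e2 oppr0.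
  - exact: e3.
  - by [].
by apply/eqP/rowP => m; rewrite !mxE; exact: (h0 m (ltn_ord m)).
Qed.
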